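(* Let $k\in\mathbb{N}$ and let $M_\psi$ be a bounded multiplication operator on $\mathcal{L}^{(k)}$ or on $\mathcal{L}^{(k)}_0$. Then (a) $\sigma_p(M_\psi)=\psi(T)$; (b) $\sigma(M_\psi)=\overline{\psi(T)}$; (c) $\sigma_{ap}(M_\psi)=\overline{\psi(T)}$.
   Context: $T$ is a tree (locally finite, connected, simply connected graph, identified with its vertex set) without terminal vertices, rooted at $o$. $|v|$ is the distance (number of edges) from $o$ to $v$; for $v\ne o$, $v^-$ is the parent of $v$ (its neighbor on the path to $o$). $T^*=T\setminus\{o\}$, $Df(v)=|f(v)-f(v^-)|$ for $v\in T^*$. For $x\ge1$: $\ell_0(x)=1$, $\ell_1(x)=1+\ln x$, $\ell_j(x)=1+\ln\ell_{j-1}(x)$ for $j\ge2$. $\mathcal{L}^{(k)}$ is the space of $f:T\to\mathbb{C}$ with $\sup_{v\in T^*}|v|\prod_{j=0}^{k-1}\ell_j(|v|)Df(v)<\infty$, normed by $\|f\|_k=|f(o)|+\sup_{v\in T^*}|v|\prod_{j=0}^{k-1}\ell_j(|v|)Df(v)$; $\mathcal{L}^{(k)}_0$ is its subspace of $f$ with $|v|\prod_{j=0}^{k-1}\ell_j(|v|)Df(v)\to0$ as $|v|\to\infty$. $M_\psi f=\psi f$. $\sigma$, $\sigma_p$, $\sigma_{ap}$ denote the spectrum, point spectrum and approximate point spectrum of the operator on the space where it acts. *)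

(* Defs.v *)
From Stdlib Require Import Reals Lra ClassicalEpsilon.
From Coquelicot Require Import Coquelicot.
Open Scope R_scope.

(** A rooted tree on a vertex type [V] is given by a root [o] and a parent map
  [par]; the edges are the pairs {v, par v} for v <> o.  (The value [par o]
  is irrelevant.)  Every vertex reaches [o] by iterating [par]; this makes the
  graph connected and simply connected. *)

Definition child {V : Type} (o : V) (par : V -> V) (v w : V) : Prop :=
  w <> o /\ par w = v.

Definition is_rooted_tree {V : Type} (o : V) (par : V -> V) : Prop :=
  forall v : V, exists n : nat, Nat.iter n par v = o.

(** locally finite: every vertex has finitely many neighbours
    (equivalently finitely many children). *)
Definition locally_finite {V : Type} (o : V) (par : V -> V) : Prop :=
  forall v : V, exists l : list V, forall w, child o par v w -> List.In w l.

(** no terminal vertices: no vertex has exactly one neighbour.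
    The neighbours of [v] are its children and, if [v <> o], its parent. *)
Definition no_terminal_vertices {V : Type} (o : V) (par : V -> V) : Prop :=
  (forall v : V, v <> o -> exists w, child o par v w) /\
  ~ (exists w, child o par o w /\ forall w', child o par o w' -> w' = w).

Definition depth {V : Type} (o : V) (par : V -> V) (v : V) : nat :=
  epsilon (inhabits 0%nat)
    (fun n => Nat.iter n par v = o /\
              forall m, Nat.iter m par v = o -> (n <= m)%nat).

Fixpoint ell (j : nat) (x : R) : R :=
  match j with
  | O => 1
  | S O => 1 + ln x
  | S j' => 1 + ln (ell j' x)
  end.

Fixpoint prod_ell (k : nat) (x : R) : R :=
  match k with
  | O => 1
  | S k' => prod_ell k' x * ell k' x
  end.

Definition weight (k n : nat) : R := INR n * prod_ell k (INR n).

Definition Df {V : Type} (par : V -> V) (f : V -> C) (v : V) : R :=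
  Cmod (Cminus (f v) (f (par v))).

Definition wDf {V : Type} (o : V) (par : V -> V) (k : nat) (f : V -> C) (v : V) : R :=
  weight k (depth o par v) * Df par f v.

Definition Lk {V : Type} (o : V) (par : V -> V) (k : nat) (f : V -> C) : Prop :=
  exists B : R, forall v, v <> o -> wDf o par k f v <= B.

Definition Lk0 {V : Type} (o : V) (par : V -> V) (k : nat) (f : V -> C) : Prop :=
  Lk o par k f /\
  forall eps : R, 0 < eps -> exists N : nat, forall v, v <> o ->
    (N <= depth o par v)%nat -> wDf o par k f v < eps.

(** the norm ||f||_k = |f(o)| + sup_{v in T*} |v| prod ell_j(|v|) Df(v)
    (the sup over the empty set, T* = {}, is read as 0). *)
Definition normk {V : Type} (o : V) (par : V -> V) (k : nat) (f : V -> C) : R :=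
  Cmod (f o) + real (Lub_Rbar (fun x => exists v, v <> o /\ x = wDf o par k f v)).

Definition space {V : Type} (o : V) (par : V -> V) (k : nat) (zero : bool)
  : (V -> C) -> Prop :=
  if zero then Lk0 o par k else Lk o par k.

Definition Mult {V : Type} (psi : V -> C) (f : V -> C) : V -> C :=
  fun v => Cmult (psi v) (f v).

Definition bounded_op {V : Type} (X : (V -> C) -> Prop) (nrm : (V -> C) -> R)
  (A : (V -> C) -> (V -> C)) : Prop :=
  (forall f, X f -> X (A f)) /\
  exists Cst : R, forall f, X f -> nrm (A f) <= Cst * nrm f.

Definition linear_op {V : Type} (X : (V -> C) -> Prop) (A : (V -> C) -> (V -> C)) : Prop :=
  forall (a b : C) f g, X f -> X g -> forall v,
    A (fun u => Cplus (Cmult a (f u)) (Cmult b (g u))) v =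
    Cplus (Cmult a (A f v)) (Cmult b (A g v)).

Definition shift_op {V : Type} (A : (V -> C) -> (V -> C)) (lam : C) (f : V -> C) : V -> C :=
  fun v => Cminus (A f v) (Cmult lam (f v)).

Definition point_spectrum {V : Type} (X : (V -> C) -> Prop)
  (A : (V -> C) -> (V -> C)) (lam : C) : Prop :=
  exists f, X f /\ (exists v, f v <> RtoC 0) /\ forall v, shift_op A lam f v = RtoC 0.

Definition spectrum {V : Type} (X : (V -> C) -> Prop) (nrm : (V -> C) -> R)
  (A : (V -> C) -> (V -> C)) (lam : C) : Prop :=
  ~ exists S : (V -> C) -> (V -> C),
      bounded_op X nrm S /\ linear_op X S /\
      (forall f, X f -> forall v, S (shift_op A lam f) v = f v) /\
      (forall f, X f -> forall v, shift_op A lam (S f) v = f v).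

Definition approx_point_spectrum {V : Type} (X : (V -> C) -> Prop)
  (nrm : (V -> C) -> R) (A : (V -> C) -> (V -> C)) (lam : C) : Prop :=
  exists fs : nat -> (V -> C),
    (forall n, X (fs n)) /\ (forall n, nrm (fs n) = 1) /\
    is_lim_seq (fun n => nrm (shift_op A lam (fs n))) 0.

Definition in_closure_range {V : Type} (psi : V -> C) (lam : C) : Prop :=
  forall eps : R, 0 < eps -> exists v, Cmod (Cminus (psi v) lam) < eps.

(* Main.v *)
Require Import Defs.
From Stdlib Require Import Reals Lra Lia ClassicalEpsilon Classical FunctionalExtensionality List.
From Coquelicot Require Import Coquelicot.
Open Scope R_scope.

Lemma ell_ge1 j x : 1 <= x -> 1 <= ell j x.
Proof.
  intro Hx. induction j as [|j IH].
  - simpl; lra.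
  - destruct j as [|j].
    + simpl. assert (0 <= ln x) by (rewrite <- ln_1; apply ln_le; lra). lra.
    + change (1 <= 1 + ln (ell (S j) x)).
      assert (0 <= ln (ell (S j) x)) by (rewrite <- ln_1; apply ln_le; lra). lra.
Qed.

Lemma prod_ell_ge1 k x : 1 <= x -> 1 <= prod_ell k x.
Proof.
  intro Hx. induction k as [|k IH]; simpl; [lra|].
  pose proof (ell_ge1 k x Hx). nra.
Qed.

Lemma weight_ge0 k n : 0 <= weight k n.
Proof.
  unfold weight. destruct n as [|n].
  - simpl. lra.
  - assert (1 <= INR (S n)) by (apply (le_INR 1); lia).
    pose proof (prod_ell_ge1 k _ H). nra.
Qed.

Lemma weight_pos k n : (1 <= n)%nat -> 0 < weight k n.
Proof.
  intro Hn. unfold weight.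
  assert (1 <= INR n) by (apply (le_INR 1); lia).
  pose proof (prod_ell_ge1 k _ H). nra.
Qed.

Lemma iter_fix {V : Type} (par : V -> V) v n : par v = v -> Nat.iter n par v = v.
Proof. intro H. induction n; simpl; [reflexivity| rewrite IHn; exact H]. Qed.

Lemma depth_spec {V : Type} (o : V) (par : V -> V) v :
  is_rooted_tree o par -> Nat.iter (depth o par v) par v = o.
Proof.
  intro Ht. unfold depth.
  assert (Hex : exists n, Nat.iter n par v = o /\
              forall m, Nat.iter m par v = o -> (n <= m)%nat).
  { destruct (Wf_nat.dec_inh_nat_subset_has_unique_least_element
      (fun n => Nat.iter n par v = o)) as [n [[H1 H2] _]].
    - intro n; apply classic.
    - apply Ht.
    - exists n; split; auto. }
  pose proof (epsilon_spec (inhabits 0%nat) _ Hex) as [H _]. exact H.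
Qed.

Lemma depth_pos {V : Type} (o : V) (par : V -> V) v :
  is_rooted_tree o par -> v <> o -> (1 <= depth o par v)%nat.
Proof.
  intros Ht Hv. pose proof (depth_spec o par v Ht).
  destruct (depth o par v); [simpl in H; congruence | lia].
Qed.

Lemma par_neq {V : Type} (o : V) (par : V -> V) v :
  is_rooted_tree o par -> v <> o -> par v <> v.
Proof.
  intros Ht Hv Hp. destruct (Ht v) as [n Hn]. rewrite iter_fix in Hn; auto.
Qed.

Lemma wDf_ge0 {V : Type} (o : V) par k f v : 0 <= wDf o par k f v.
Proof. unfold wDf, Df. apply Rmult_le_pos; [apply weight_ge0| apply Cmod_ge_0]. Qed.

Definition supw {V : Type} (o : V) (par : V -> V) (k : nat) (f : V -> C) : R :=
  real (Lub_Rbar (fun x => exists v, v <> o /\ x = wDf o par k f v)).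

Lemma normk_eq {V : Type} (o : V) par k f : normk o par k f = Cmod (f o) + supw o par k f.
Proof. reflexivity. Qed.

Lemma supw_ge0 {V : Type} (o : V) par k f : 0 <= supw o par k f.
Proof.
  unfold supw.
  pose proof (Lub_Rbar_correct (fun x => exists v, v <> o /\ x = wDf o par k f v)) as [Hub Hlub].
  destruct (Lub_Rbar _) as [l| |] eqn:E; simpl; try lra.
  destruct (classic (exists v, v <> o)) as [[v Hv]|Hn].
  - assert (H := Hub (wDf o par k f v) (ex_intro _ v (conj Hv eq_refl))).
    simpl in H. pose proof (wDf_ge0 o par k f v). lra.
  - assert (H : Rbar_le (Finite l) m_infty).
    { apply Hlub. intros x [v [Hv _]]. exfalso; apply Hn; eauto. }
    simpl in H. contradiction.
Qed.

Lemma normk_ge0 {V : Type} (o : V) par k f : 0 <= normk o par k f.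
Proof. rewrite normk_eq. pose proof (Cmod_ge_0 (f o)). pose proof (supw_ge0 o par k f). lra. Qed.

Lemma supw_ub {V : Type} (o : V) par k f v :
  Lk o par k f -> v <> o -> wDf o par k f v <= supw o par k f.
Proof.
  intros [B HB] Hv. unfold supw.
  pose proof (Lub_Rbar_correct (fun x => exists v, v <> o /\ x = wDf o par k f v)) as [Hub Hlub].
  assert (H := Hub (wDf o par k f v) (ex_intro _ v (conj Hv eq_refl))).
  assert (H2 : Rbar_le (Lub_Rbar (fun x => exists v, v <> o /\ x = wDf o par k f v)) (Finite B)).
  { apply Hlub. intros x [w [Hw ->]]. simpl. apply HB; auto. }
  destruct (Lub_Rbar _) as [l| |]; simpl in *; try contradiction. exact H.
Qed.

Lemma supw_le {V : Type} (o : V) par k f B :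
  0 <= B -> (forall v, v <> o -> wDf o par k f v <= B) -> supw o par k f <= B.
Proof.
  intros HB0 HB. unfold supw.
  pose proof (Lub_Rbar_correct (fun x => exists v, v <> o /\ x = wDf o par k f v)) as [Hub Hlub].
  assert (H2 : Rbar_le (Lub_Rbar (fun x => exists v, v <> o /\ x = wDf o par k f v)) (Finite B)).
  { apply Hlub. intros x [w [Hw ->]]. simpl. apply HB; auto. }
  destruct (Lub_Rbar _) as [l| |]; simpl in *; try contradiction; lra.
Qed.

Lemma dom_Lk {V : Type} (o : V) par k f g h a b :
  0 <= a -> 0 <= b -> Lk o par k f -> Lk o par k g ->
  (forall u, u <> o -> wDf o par k h u <= a * wDf o par k f u + b * wDf o par k g u) ->
  Lk o par k h.
Proof.
  intros Ha Hb [B1 H1] [B2 H2] H. exists (a * B1 + b * B2). intros v Hv.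
  specialize (H v Hv). specialize (H1 v Hv). specialize (H2 v Hv). nra.
Qed.

Lemma dom_Lk0 {V : Type} (o : V) par k f g h a b :
  0 <= a -> 0 <= b -> Lk0 o par k f -> Lk0 o par k g ->
  (forall u, u <> o -> wDf o par k h u <= a * wDf o par k f u + b * wDf o par k g u) ->
  Lk0 o par k h.
Proof.
  intros Ha Hb [L1 H1] [L2 H2] H. unfold Lk0. split; [eapply dom_Lk; [exact Ha|exact Hb|exact L1|exact L2|exact H]|].
  intros eps Heps.
  destruct (H1 (eps / (2 * (a + 1)))) as [N1 HN1].
  { apply Rdiv_lt_0_compat; lra. }
  destruct (H2 (eps / (2 * (b + 1)))) as [N2 HN2].
  { apply Rdiv_lt_0_compat; lra. }
  exists (max N1 N2). intros v Hv Hd.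
  specialize (HN1 v Hv ltac:(lia)). specialize (HN2 v Hv ltac:(lia)).
  specialize (H v Hv).
  pose proof (wDf_ge0 o par k f v). pose proof (wDf_ge0 o par k g v).
  assert (a * wDf o par k f v < (a+1) * (eps / (2 * (a + 1)))) by nra.
  assert (b * wDf o par k g v < (b+1) * (eps / (2 * (b + 1)))) by nra.
  replace ((a+1) * (eps / (2 * (a + 1)))) with (eps/2) in H4 by (field; lra).
  replace ((b+1) * (eps / (2 * (b + 1)))) with (eps/2) in H5 by (field; lra).
  lra.
Qed.

Lemma Lk0_Lk {V : Type} (o : V) par k zero f : space o par k zero f -> Lk o par k f.
Proof. destruct zero; simpl; [intros [H _]|]; auto. Qed.

Lemma dom_space {V : Type} (o : V) par k zero f g h a b :
  0 <= a -> 0 <= b -> space o par k zero f -> space o par k zero g ->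
  (forall u, u <> o -> wDf o par k h u <= a * wDf o par k f u + b * wDf o par k g u) ->
  space o par k zero h.
Proof. destruct zero; simpl; [apply dom_Lk0|apply dom_Lk]. Qed.

Lemma dom_norm {V : Type} (o : V) par k f g h a b :
  0 <= a -> 0 <= b -> Lk o par k f -> Lk o par k g ->
  (forall u, u <> o -> wDf o par k h u <= a * wDf o par k f u + b * wDf o par k g u) ->
  normk o par k h <= Cmod (h o) + a * supw o par k f + b * supw o par k g.
Proof.
  intros Ha Hb Hf Hg H. rewrite normk_eq, Rplus_assoc. apply Rplus_le_compat_l.
  apply supw_le.
  - pose proof (supw_ge0 o par k f); pose proof (supw_ge0 o par k g); nra.
  - intros v Hv. specialize (H v Hv).
    pose proof (supw_ub o par k f v Hf Hv). pose proof (supw_ub o par k g v Hg Hv). nra.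
Qed.

Definition cscal (c : C) {V : Type} (f : V -> C) : V -> C := fun u => Cmult c (f u).

Lemma wDf_cscal {V : Type} (o : V) par k c f u :
  wDf o par k (cscal c f) u = Cmod c * wDf o par k f u.
Proof.
  unfold wDf, Df, cscal.
  replace (Cminus (Cmult c (f u)) (Cmult c (f (par u)))) with (Cmult c (Cminus (f u) (f (par u)))) by ring.
  rewrite Cmod_mult. ring.
Qed.

Lemma cscal_space {V : Type} (o : V) par k zero c f :
  space o par k zero f -> space o par k zero (cscal c f).
Proof.
  intro Hf. apply (dom_space o par k zero f f _ (Cmod c) 0); auto using Cmod_ge_0; try lra.
  intros u _. rewrite wDf_cscal. pose proof (wDf_ge0 o par k f u). lra.
Qed.

Lemma cscal_norm_le {V : Type} (o : V) par k c f :
  Lk o par k f -> normk o par k (cscal c f) <= Cmod c * normk o par k f.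
Proof.
  intro Hf. eapply Rle_trans.
  apply (dom_norm o par k f f _ (Cmod c) 0); auto using Cmod_ge_0; try lra.
  intros u _. rewrite wDf_cscal. pose proof (wDf_ge0 o par k f u). lra.
  rewrite normk_eq. unfold cscal. rewrite Cmod_mult. lra.
Qed.

Lemma cscal_norm_eq {V : Type} (o : V) par k c f :
  c <> RtoC 0 -> Lk o par k f -> normk o par k (cscal c f) = Cmod c * normk o par k f.
Proof.
  intros Hc Hf. apply Rle_antisym; [apply cscal_norm_le; auto|].
  assert (Hf2 : Lk o par k (cscal c f)).
  { apply (dom_Lk o par k f f _ (Cmod c) 0); auto using Cmod_ge_0; try lra.
    intros u _. rewrite wDf_cscal. pose proof (wDf_ge0 o par k f u). lra. }
  pose proof (cscal_norm_le o par k (Cinv c) _ Hf2).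
  assert (E : cscal (Cinv c) (cscal c f) = f).
  { apply functional_extensionality. intro u. unfold cscal. field. auto. }
  rewrite E in H. rewrite Cmod_inv in H; auto.
  pose proof (proj1 (Cmod_gt_0 c) Hc).
  apply (Rmult_le_compat_l (Cmod c)) in H; [|lra].
  rewrite <- Rmult_assoc, Rinv_r in H; lra.
Qed.

Definition chi {V : Type} (v : V) : V -> C :=
  fun u => if excluded_middle_informative (u = v) then RtoC 1 else RtoC 0.

Fixpoint sumw {V : Type} (o : V) par k (l : list V) : R :=
  match l with nil => 0 | w :: l' => weight k (depth o par w) + sumw o par k l' end.
Fixpoint maxd {V : Type} (o : V) par (l : list V) : nat :=
  match l with nil => 0%nat | w :: l' => max (depth o par w) (maxd o par l') end.

Lemma sumw_ge0 {V : Type} (o : V) par k l : 0 <= sumw o par k l.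
Proof. induction l; simpl; [lra|]. pose proof (weight_ge0 k (depth o par a)); lra. Qed.

Lemma sumw_in {V : Type} (o : V) par k l u : In u l -> weight k (depth o par u) <= sumw o par k l.
Proof.
  induction l as [|w l IH]; simpl; [tauto|]. intros [<-|H].
  - pose proof (sumw_ge0 o par k l); lra.
  - pose proof (weight_ge0 k (depth o par w)); specialize (IH H); lra.
Qed.

Lemma maxd_in {V : Type} (o : V) par l u : In u l -> (depth o par u <= maxd o par l)%nat.
Proof.
  induction l as [|w l IH]; simpl; [tauto|]. intros [<-|H]; [lia|]. specialize (IH H); lia.
Qed.

Lemma Df_chi_le1 {V : Type} par (v u : V) : Df par (chi v) u <= 1.
Proof.
  unfold Df, chi.
  destruct (excluded_middle_informative (u = v)), (excluded_middle_informative (par u = v));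
  [replace (Cminus (RtoC 1) (RtoC 1)) with (RtoC 0) by ring
  |replace (Cminus (RtoC 1) (RtoC 0)) with (RtoC 1) by ring
  |replace (Cminus (RtoC 0) (RtoC 1)) with (RtoC (-1)) by (unfold RtoC, Cminus, Copp, Cplus; simpl; f_equal; ring)
  |replace (Cminus (RtoC 0) (RtoC 0)) with (RtoC 0) by ring];
  rewrite Cmod_R; unfold Rabs; destruct Rcase_abs; lra.
Qed.

Lemma Df_chi_zero {V : Type} (o : V) par (v u : V) l :
  (forall w, child o par v w -> In w l) -> u <> o -> u <> v -> ~ In u l -> Df par (chi v) u = 0.
Proof.
  intros Hl Hu Huv Hin. unfold Df, chi.
  destruct (excluded_middle_informative (u = v)); [congruence|].
  destruct (excluded_middle_informative (par u = v)).
  { exfalso. apply Hin, Hl. split; auto. }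
  replace (Cminus (RtoC 0) (RtoC 0)) with (RtoC 0) by ring. apply Cmod_0.
Qed.

Lemma chi_space {V : Type} (o : V) par k zero v :
  locally_finite o par -> space o par k zero (chi v).
Proof.
  intro Hlf. destruct (Hlf v) as [l Hl].
  assert (HLk : Lk o par k (chi v)).
  { exists (sumw o par k (v :: l)). intros u Hu. unfold wDf.
    pose proof (Df_chi_le1 par v u). pose proof (weight_ge0 k (depth o par u)).
    pose proof (Cmod_ge_0 (Cminus (chi v u) (chi v (par u)))).
    destruct (classic (In u (v :: l))) as [Hi|Hi].
    - pose proof (sumw_in o par k _ _ Hi). unfold Df in *. nra.
    - rewrite (Df_chi_zero o par v u l); auto.
      + pose proof (sumw_ge0 o par k (v :: l)). lra.
      + intro E; apply Hi; left; auto.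
      + intro E; apply Hi; right; auto. }
  destruct zero; simpl; [|exact HLk]. split; [exact HLk|].
  intros eps Heps. exists (S (maxd o par (v :: l))). intros u Hu Hd.
  assert (Hi : ~ In u (v :: l)).
  { intro Hi. pose proof (maxd_in o par _ _ Hi). lia. }
  unfold wDf. rewrite (Df_chi_zero o par v u l); auto.
  + lra.
  + intro E; apply Hi; left; auto.
  + intro E; apply Hi; right; auto.
Qed.

Lemma chi_norm_pos {V : Type} (o : V) par k v :
  is_rooted_tree o par -> locally_finite o par -> 0 < normk o par k (chi v).
Proof.
  intros Ht Hlf. rewrite normk_eq.
  destruct (classic (v = o)) as [->|Hv].
  - unfold chi at 1. destruct (excluded_middle_informative (o = o)); [|congruence].
    rewrite Cmod_R, Rabs_R1. pose proof (supw_ge0 o par k (chi o)). lra.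
  - pose proof (supw_ub o par k (chi v) v (chi_space o par k false v Hlf) Hv).
    pose proof (Cmod_ge_0 (chi v o)).
    assert (0 < wDf o par k (chi v) v); [|lra].
    unfold wDf, Df, chi.
    destruct (excluded_middle_informative (v = v)); [|congruence].
    destruct (excluded_middle_informative (par v = v)).
    { exfalso; eapply par_neq; eauto. }
    replace (Cminus (RtoC 1) (RtoC 0)) with (RtoC 1) by ring. rewrite Cmod_R, Rabs_R1.
    rewrite Rmult_1_r. apply weight_pos. apply depth_pos; auto.
Qed.

Lemma Mult_chi {V : Type} (psi : V -> C) v : Mult psi (chi v) = cscal (psi v) (chi v).
Proof.
  apply functional_extensionality; intro u. unfold Mult, cscal, chi.
  destruct (excluded_middle_informative (u = v)) as [->|]; auto. ring.
Qed.

Lemma psi_bounded {V : Type} (o : V) par k zero psi :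
  is_rooted_tree o par -> locally_finite o par ->
  bounded_op (space o par k zero) (normk o par k) (Mult psi) ->
  exists M, 0 <= M /\ forall v, Cmod (psi v) <= M.
Proof.
  intros Ht Hlf [_ [C0 HC]]. exists (Rmax C0 0). split; [apply Rmax_r|].
  intro v. pose proof (chi_norm_pos o par k v Ht Hlf) as Hp.
  specialize (HC (chi v) (chi_space o par k zero v Hlf)).
  rewrite Mult_chi in HC.
  destruct (classic (psi v = RtoC 0)) as [E|E].
  - rewrite E, Cmod_0. apply Rmax_r.
  - rewrite cscal_norm_eq in HC; auto.
    2: apply (Lk0_Lk o par k false); apply chi_space; auto.
    assert (Cmod (psi v) <= C0).
    { apply (Rmult_le_reg_r (normk o par k (chi v))); auto. }
    pose proof (Rmax_l C0 0). lra.
Qed.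

Lemma Cmod_minus_le (a b : C) : Cmod (Cminus a b) <= Cmod a + Cmod b.
Proof. unfold Cminus. eapply Rle_trans; [apply Cmod_triangle|]. rewrite Cmod_opp. lra. Qed.

Lemma key_ineq (x d1 d2 dl B : R) :
  0 < dl -> dl <= d1 -> dl <= d2 -> 0 <= x -> x <= B ->
  x / (d1 * d2) <= B / (dl * dl).
Proof.
  intros. unfold Rdiv. apply Rmult_le_compat; try lra.
  - left; apply Rinv_0_lt_compat; nra.
  - apply Rinv_le_contravar; nra.
Qed.

Lemma inv_exists {V : Type} (o : V) par k zero psi lam :
  is_rooted_tree o par -> locally_finite o par ->
  bounded_op (space o par k zero) (normk o par k) (Mult psi) ->
  ~ in_closure_range psi lam ->
  exists S : (V -> C) -> (V -> C),
      bounded_op (space o par k zero) (normk o par k) S /\ linear_op (space o par k zero) S /\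
      (forall f, space o par k zero f -> forall v, S (shift_op (Mult psi) lam f) v = f v) /\
      (forall f, space o par k zero f -> forall v, shift_op (Mult psi) lam (S f) v = f v).
Proof.
  intros Ht Hlf Hbdd Hncl.
  assert (Hd : exists dl, 0 < dl /\ forall v, dl <= Cmod (Cminus (psi v) lam)).
  { apply NNPP. intro Hn. apply Hncl. intros eps Heps. apply NNPP. intro Hn2.
    apply Hn. exists eps. split; auto. intro v. apply Rnot_lt_le. intro Hlt. apply Hn2. eauto. }
  destruct Hd as [dl [Hdl Hd]].
  destruct (psi_bounded o par k zero psi Ht Hlf Hbdd) as [M [HM0 HM]].
  pose proof Hbdd as [HX [C0 HC]].
  assert (Hnz : forall v, Cminus (psi v) lam <> RtoC 0).
  { intros v E. specialize (Hd v). rewrite E, Cmod_0 in Hd. lra. }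
  set (A := 2 * M + 3 * Cmod lam).
  assert (HA : 0 <= A) by (pose proof (Cmod_ge_0 lam); unfold A; lra).
  set (S := fun (g : V -> C) v => Cdiv (g v) (Cminus (psi v) lam)).
  assert (Hpt : forall g u, u <> o ->
     wDf o par k (S g) u <= (A / (dl*dl)) * wDf o par k g u + (1 / (dl*dl)) * wDf o par k (Mult psi g) u).
  { intros g u Hu. unfold wDf, Df, S, Mult.
    set (p := par u). set (w := weight k (depth o par u)).
    assert (Hw : 0 <= w) by apply weight_ge0.
    set (fu := Cminus (psi u) lam). set (fp := Cminus (psi p) lam).
    assert (E : Cminus (Cdiv (g u) fu) (Cdiv (g p) fp) =
      Cdiv (Cminus (Cmult (Cplus (Cplus fp lam) fu) (Cminus (g u) (g p)))
                   (Cminus (Cmult (psi u) (g u)) (Cmult (psi p) (g p)))) (Cmult fu fp)).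
    { unfold fu, fp. field. split; apply Hnz. }
    rewrite E, Cmod_div, Cmod_mult.
    2: { intro Z. apply (f_equal Cmod) in Z. rewrite Cmod_mult, Cmod_0 in Z.
      pose proof (Hd u) as Q1; pose proof (Hd p) as Q2; fold fu in Q1; fold fp in Q2. nra. }
    assert (Hfu : Cmod fu <= M + Cmod lam) by
      (unfold fu; pose proof (Cmod_minus_le (psi u) lam); pose proof (HM u); lra).
    assert (Hfp : Cmod fp <= M + Cmod lam) by
      (unfold fp; pose proof (Cmod_minus_le (psi p) lam); pose proof (HM p); lra).
    assert (Hs : Cmod (Cplus (Cplus fp lam) fu) <= A).
    { eapply Rle_trans; [apply Cmod_triangle|]. eapply Rle_trans;
      [apply Rplus_le_compat_r, Cmod_triangle|]. unfold A; lra. }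
    set (Dg := Cmod (Cminus (g u) (g p))).
    set (Dh := Cmod (Cminus (Cmult (psi u) (g u)) (Cmult (psi p) (g p)))).
    assert (HDg : 0 <= Dg) by apply Cmod_ge_0.
    assert (Hnum : Cmod (Cminus (Cmult (Cplus (Cplus fp lam) fu) (Cminus (g u) (g p)))
                   (Cminus (Cmult (psi u) (g u)) (Cmult (psi p) (g p)))) <= A * Dg + Dh).
    { eapply Rle_trans; [apply Cmod_minus_le|]. rewrite Cmod_mult. fold Dg Dh.
      apply Rplus_le_compat_r. apply Rmult_le_compat_r; auto. }
    pose proof (key_ineq _ _ _ _ _ Hdl (Hd u) (Hd p) (Cmod_ge_0 _) Hnum) as K.
    fold fu fp in K.
    apply (Rmult_le_compat_l w) in K; auto.
    eapply Rle_trans; [exact K|]. right. field. lra. }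
  assert (HSX : forall g, space o par k zero g -> space o par k zero (S g)).
  { intros g Hg. apply (dom_space o par k zero g (Mult psi g) _ (A/(dl*dl)) (1/(dl*dl))); auto.
    - apply Rmult_le_pos; auto. left; apply Rinv_0_lt_compat; nra.
    - apply Rmult_le_pos; [lra|]. left; apply Rinv_0_lt_compat; nra. }
  exists S. split; [split; [exact HSX|]|split; [|split]].
  - exists (/ dl + A / (dl*dl) + (1/(dl*dl)) * Rmax C0 0).
    intros g Hg.
    assert (HgL := Lk0_Lk o par k zero g Hg).
    assert (HhL := Lk0_Lk o par k zero _ (HX g Hg)).
    pose proof (dom_norm o par k g (Mult psi g) (S g) (A/(dl*dl)) (1/(dl*dl))) as HN.
    assert (Hi : 0 < / (dl*dl)) by (apply Rinv_0_lt_compat; nra).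
    specialize (HN ltac:(unfold Rdiv; nra) ltac:(unfold Rdiv; nra) HgL HhL (Hpt g)).
    assert (H0 : Cmod (S g o) <= / dl * normk o par k g).
    { unfold S. rewrite Cmod_div; auto. rewrite normk_eq.
      pose proof (supw_ge0 o par k g). pose proof (Cmod_ge_0 (g o)).
      pose proof (Hd o). unfold Rdiv.
      assert (/ Cmod (Cminus (psi o) lam) <= / dl) by (apply Rinv_le_contravar; lra).
      assert (0 <= / dl) by (left; apply Rinv_0_lt_compat; lra). nra. }
    assert (H1 : supw o par k g <= normk o par k g)
      by (rewrite normk_eq; pose proof (Cmod_ge_0 (g o)); lra).
    assert (H2 : supw o par k (Mult psi g) <= Rmax C0 0 * normk o par k g).
    { specialize (HC g Hg). rewrite normk_eq in HC.
      pose proof (Cmod_ge_0 (Mult psi g o)). pose proof (normk_ge0 o par k g).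
      pose proof (Rmax_l C0 0). nra. }
    assert (HAd : 0 <= A / (dl*dl)) by (unfold Rdiv; nra).
    unfold Rdiv in *. nra.
  - intros a b f g Hf Hg v. unfold S. field. apply Hnz.
  - intros f Hf v. unfold S, shift_op, Mult. field. apply Hnz.
  - intros f Hf v. unfold S, shift_op, Mult. field. apply Hnz.
Qed.

Lemma shift_chi {V : Type} (psi : V -> C) lam v :
  shift_op (Mult psi) lam (chi v) = cscal (Cminus (psi v) lam) (chi v).
Proof.
  apply functional_extensionality; intro u. unfold shift_op, Mult, cscal, chi.
  destruct (excluded_middle_informative (u = v)) as [->|]; ring.
Qed.

Lemma shift_cscal {V : Type} (psi : V -> C) lam v c :
  shift_op (Mult psi) lam (cscal c (chi v)) = cscal (Cminus (psi v) lam) (cscal c (chi v)).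
Proof.
  apply functional_extensionality; intro u. unfold shift_op, Mult, cscal, chi.
  destruct (excluded_middle_informative (u = v)) as [->|]; ring.
Qed.

Lemma small_contra (K c n : R) : 0 <= K -> 0 <= c -> c < / (K + 1) -> 0 < n -> n <= K * (c * n) -> False.
Proof.
  intros HK Hc Hlt Hn H.
  assert (K * c < 1).
  { apply (Rmult_lt_compat_l (K+1)) in Hlt; [|lra]. rewrite Rinv_r in Hlt; [|lra]. nra. }
  nra.
Qed.

Theorem theorem4p2 (V : Type) (o : V) (par : V -> V)
  (Htree : is_rooted_tree o par) (Hlf : locally_finite o par)
  (Hnt : no_terminal_vertices o par)
  (k : nat) (Hk : (1 <= k)%nat) (zero : bool) (psi : V -> C)
  (Hbdd : bounded_op (space o par k zero) (normk o par k) (Mult psi)) :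
  (forall lam : C,
     point_spectrum (space o par k zero) (Mult psi) lam <-> exists v, lam = psi v) /\
  (forall lam : C,
     spectrum (space o par k zero) (normk o par k) (Mult psi) lam <->
     in_closure_range psi lam) /\
  (forall lam : C,
     approx_point_spectrum (space o par k zero) (normk o par k) (Mult psi) lam <->
     in_closure_range psi lam).
Proof.
  split; [|split].
  - intro lam. split.
    + intros [f [Hf [[v Hv] Hs]]]. exists v. specialize (Hs v).
      unfold shift_op, Mult in Hs.
      assert (E : Cmult (Cminus (psi v) lam) (f v) = RtoC 0) by (rewrite <- Hs; ring).
      apply (f_equal Cmod) in E. rewrite Cmod_mult, Cmod_0 in E.
      pose proof (proj1 (Cmod_gt_0 _) Hv).
      assert (Cmod (Cminus (psi v) lam) = 0) by nra.
      apply Cmod_eq_0 in H0.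
      replace lam with (Cminus (psi v) (Cminus (psi v) lam)) by ring. rewrite H0. ring.
    + intros [v ->]. exists (chi v). split; [apply chi_space; auto|split].
      * exists v. unfold chi. destruct (excluded_middle_informative (v = v)); [|congruence].
        intro E. apply (f_equal fst) in E. simpl in E. lra.
      * intro u. rewrite shift_chi. unfold cscal. replace (Cminus (psi v) (psi v)) with (RtoC 0) by ring. ring.
  - intro lam. split.
    + intro Hsp. apply NNPP. intro Hn. apply Hsp. apply inv_exists; auto.
    + intros Hcl [S [[HSX [K HK]] [_ [Hl _]]]].
      set (K' := Rmax K 0).
      assert (HK' : 0 <= K') by apply Rmax_r.
      destruct (Hcl (/ (K' + 1))) as [v Hv]. { apply Rinv_0_lt_compat; lra. }
      set (c := Cminus (psi v) lam).
      assert (He := chi_space o par k zero v Hlf).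
      assert (HeL := Lk0_Lk o par k zero _ He).
      assert (HE : S (shift_op (Mult psi) lam (chi v)) = chi v).
      { apply functional_extensionality; intro u. apply Hl; auto. }
      assert (Hsh : space o par k zero (shift_op (Mult psi) lam (chi v))).
      { rewrite shift_chi. apply cscal_space; auto. }
      specialize (HK _ Hsh). rewrite HE in HK.
      pose proof (normk_ge0 o par k (shift_op (Mult psi) lam (chi v))) as Hn0.
      assert (HK2 : normk o par k (chi v) <= K' * normk o par k (shift_op (Mult psi) lam (chi v))).
      { pose proof (Rmax_l K 0). fold K' in H. nra. }
      rewrite shift_chi in HK2. pose proof (cscal_norm_le o par k c (chi v) HeL) as Hs.
      pose proof (chi_norm_pos o par k v Htree Hlf) as Hp.
      apply (small_contra K' (Cmod c) (normk o par k (chi v))); auto using Cmod_ge_0.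
      fold c in HK2. eapply Rle_trans; [exact HK2|]. apply Rmult_le_compat_l; auto.
  - intro lam. split.
    + intros [fs [HX [H1 Hlim]]]. apply NNPP. intro Hn.
      destruct (inv_exists o par k zero psi lam Htree Hlf Hbdd Hn) as [S [[HSX [K HK]] [_ [Hl _]]]].
      set (K' := Rmax K 0).
      assert (HK' : 0 <= K') by apply Rmax_r.
      apply is_lim_seq_spec in Hlim.
      assert (Hep : 0 < / (K' + 1)) by (apply Rinv_0_lt_compat; lra).
      destruct (Hlim (mkposreal _ Hep)) as [N HN]. specialize (HN N (le_n N)). simpl in HN.
      rewrite Rminus_0_r in HN.
      assert (HE : S (shift_op (Mult psi) lam (fs N)) = fs N).
      { apply functional_extensionality; intro u. apply Hl; auto. }
      assert (Hsh : space o par k zero (shift_op (Mult psi) lam (fs N))).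
      { apply (dom_space o par k zero (Mult psi (fs N)) (fs N) _ 1 (Cmod lam)); auto using Cmod_ge_0.
        - lra.
        - apply Hbdd; auto.
        - intros u _. unfold wDf, Df, shift_op, Mult.
          pose proof (weight_ge0 k (depth o par u)).
          replace (Cminus (Cminus (Cmult (psi u) (fs N u)) (Cmult lam (fs N u)))
                          (Cminus (Cmult (psi (par u)) (fs N (par u))) (Cmult lam (fs N (par u)))))
            with (Cminus (Cminus (Cmult (psi u) (fs N u)) (Cmult (psi (par u)) (fs N (par u))))
                         (Cmult lam (Cminus (fs N u) (fs N (par u))))) by ring.
          pose proof (Cmod_minus_le (Cminus (Cmult (psi u) (fs N u)) (Cmult (psi (par u)) (fs N (par u))))
                         (Cmult lam (Cminus (fs N u) (fs N (par u))))).
          rewrite Cmod_mult in H0. nra. }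
      specialize (HK _ Hsh). rewrite HE, H1 in HK.
      pose proof (normk_ge0 o par k (shift_op (Mult psi) lam (fs N))) as Hn0.
      rewrite Rabs_pos_eq in HN; auto.
      apply (small_contra K' (normk o par k (shift_op (Mult psi) lam (fs N))) 1); auto; try lra.
      pose proof (Rmax_l K 0). fold K' in H. nra.
    + intro Hcl.
      assert (Hch : forall n : nat, { v | Cmod (Cminus (psi v) lam) < / INR (S n) }).
      { intro n. apply constructive_indefinite_description. apply Hcl.
        apply Rinv_0_lt_compat. apply lt_0_INR. lia. }
      set (vs := fun n => proj1_sig (Hch n)).
      set (fs := fun n => cscal (RtoC (/ normk o par k (chi (vs n)))) (chi (vs n))).
      exists fs. split; [|split].
      * intro n. apply cscal_space, chi_space; auto.
      * intro n. unfold fs. pose proof (chi_norm_pos o par k (vs n) Htree Hlf) as Hp.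
        rewrite cscal_norm_eq.
        -- rewrite Cmod_R, Rabs_pos_eq. field. lra. left; apply Rinv_0_lt_compat; auto.
        -- intro E. apply (f_equal fst) in E. simpl in E.
           pose proof (Rinv_0_lt_compat _ Hp). lra.
        -- apply (Lk0_Lk o par k false). apply chi_space; auto.
      * apply (is_lim_seq_le_le (fun _ => 0) _ (fun n => / INR (S n))).
        -- intro n. split; [apply normk_ge0|].
           unfold fs. rewrite shift_cscal.
           pose proof (chi_norm_pos o par k (vs n) Htree Hlf) as Hp.
           assert (HL : Lk o par k (cscal (RtoC (/ normk o par k (chi (vs n)))) (chi (vs n)))).
           { apply (Lk0_Lk o par k false). apply cscal_space, chi_space; auto. }
           eapply Rle_trans; [apply cscal_norm_le; auto|].
           rewrite cscal_norm_eq.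
           ++ rewrite Cmod_R, Rabs_pos_eq.
              ** rewrite Rinv_l; [|lra]. rewrite Rmult_1_r. left. exact (proj2_sig (Hch n)).
              ** left; apply Rinv_0_lt_compat; auto.
           ++ intro E. apply (f_equal fst) in E. simpl in E.
              pose proof (Rinv_0_lt_compat _ Hp). lra.
           ++ apply (Lk0_Lk o par k false). apply chi_space; auto.
        -- apply is_lim_seq_const.
        -- replace (Finite 0) with (Rbar_inv p_infty) by reflexivity.
           apply is_lim_seq_inv; [|discriminate].
           apply (is_lim_seq_incr_1 INR p_infty). apply is_lim_seq_INR.
Qed.
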